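(* Let $\mathcal G$ be a good pseudogroup on a compact metric space $X$ with good generating set $\mathcal G_1$, and suppose the compacted generating set $\mathcal G_2$ is symmetric. Then every Borel probability measure $\mu$ on $X$ which is $\mathcal G$-invariant, ergodic and $(\mathcal G,\mathcal G_2)$-homogeneous, and whose local upper measure entropy $\overline{h}_\mu((\mathcal G,\mathcal G_2),x)$ is positive for every $x\in X$, is $(\mathcal G,\mathcal G_1)$-expansive.
   Context: $\mathrm{Homeo}(X)$: homeomorphisms $g:D_g\to R_g$ between open subsets of $X$, composed on natural domains $D_{h\circ g}=g^{-1}(D_h)$; $g(A)$ means $g(A\cap D_g)$. A pseudogroup is a subset of $\mathrm{Homeo}(X)$ containing $\mathrm{id}_X$, closed under composition, inversion, restriction to open subsets, and gluing along open covers of the domain. $\Gamma$ generates $\mathcal G$ if $\bigcup_{g\in\Gamma}(D_g\cup R_g)=X$ and $\mathcal G$ is exactly the set of $g\in\mathrm{Homeo}(X)$ locally equal near each point of $D_g$ to a finite composition of elements of $\Gamma$ and their inverses; $\Gamma$ is symmetric if it contains $\mathrm{id}_X$ and is closed under inverses. A finite symmetric generating set $\mathcal G_1$ is good if for each $g\in\mathcal G_1$ there is a compact $K_g\subset D_g$ such that $\mathcal G_2=\{g|_{\mathrm{int}(K_g)}:g\in\mathcal G_1\}$ still generates $\mathcal G$ ($\mathcal G_2$ is the compacted generating set; $\mathcal G$ is good if it has a good generating set). For $i=1,2$: $\mathcal G^i_n=\{h_1\circ\cdots\circ h_n:h_j\in\mathcal G_i\}$, $\mathcal G^{i,x}_n=\{g\in\mathcal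 G^i_n:x\in D_g\}$, $B^i_n(x,\varepsilon)=\{y:d(g(x),g(y))<\varepsilon\ \forall g\in\mathcal G^{i,x}_n\cap\mathcal G^{i,y}_n\}$, $\Phi^i_\delta(x)=\{y:d(g(x),g(y))\le\delta\ \forall n,\ \forall g\in\mathcal G^{i,x}_n\cap\mathcal G^{i,y}_n\}$. $\mu$ is $\mathcal G$-invariant if $\mu(g(A))=\mu(A)$ for all $g\in\mathcal G$ and Borel $A\subset D_g$; it is ergodic if every Borel $A$ with $g(A\cap D_g)\subset A$ for all $g\in\mathcal G$ has $\mu(A)\in\{0,1\}$. $\mu$ is $(\mathcal G,\mathcal G_2)$-homogeneous if $\mu(K)<\infty$ for compact $K$, some compact $K_0$ has $\mu(K_0)>0$, and for every $\varepsilon>0$ there are $\delta,c>0$ with $\mu(B^2_n(y,\delta))\le c\,\mu(B^2_n(x,\varepsilon))$ for all $n,x,y$. $\overline{h}_\mu((\mathcal G,\mathcal G_2),x)=\lim_{\varepsilon\to0}\limsup_{n\to\infty}-\frac1n\log\mu(B^2_n(x,\varepsilon))$. $\mu$ is $(\mathcal G,\mathcal G_1)$-expansive if there is $\delta>0$ with $\mu(\Phi^1_\delta(x))=0$ for all $x\in X$. *)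

(* Defs.v *)
From HB Require Import structures.
From mathcomp Require Import all_boot all_order all_algebra.
From mathcomp Require Import all_classical all_reals all_analysis.
From Stdlib Require List.
Set Implicit Arguments. Unset Strict Implicit. Unset Printing Implicit Defensive.
Import Order.TTheory GRing.Theory Num.Theory.
Local Open Scope classical_set_scope.
Local Open Scope ring_scope.

(* A metric space whose carrier is nonempty (pointed); needed so that the
   Borel sigma-algebra type [g_sigma_algebraType] gets a measurable structure. *)
HB.structure Definition PointedMetric (R : numDomainType) :=
  {M of Metric R M & isPointed M}.

Notation borel X := (g_sigma_algebraType (@open X)).

Section PartialMaps.
Context {X : topologicalType}.

Definition parmap := X -> option X.

Definition pdom (g : parmap) : set X := [set x | exists y, g x = Some y].
Definition prng (g : parmap) : set X := [set y | exists x, g x = Some y].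
Definition pimage (g : parmap) (A : set X) : set X :=
  [set y | exists2 x, A x & g x = Some y].

Definition is_phomeo (g : parmap) : Prop :=
  [/\ open (pdom g), open (prng g),
      (forall x x' y, g x = Some y -> g x' = Some y -> x = x'),
      (* continuity of g on D_g *)
      (forall x y, g x = Some y -> forall V, nbhs y V ->
         nbhs x [set x' | forall y', g x' = Some y' -> V y'])
    & (* continuity of g^{-1} on R_g *)
      (forall x y, g x = Some y -> forall U, nbhs x U ->
         nbhs y [set y' | forall x', g x' = Some y' -> U x'])].

Definition pid : parmap := fun x => Some x.
Definition pcomp (h g : parmap) : parmap := fun x => obind h (g x).
Definition is_pinv (g h : parmap) : Prop :=
  forall x y, g x = Some y <-> h y = Some x.
Definition prestr (g : parmap) (U : set X) : parmap :=
  fun x => if `[< U x >] then g x else None.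

(* h_1 o h_2 o ... o h_n for ws = [:: h_1; ...; h_n] (identity if n = 0) *)
Definition pcomps (ws : seq parmap) : parmap := foldr pcomp pid ws.

Record pseudogroup (G : set parmap) : Prop := {
  pg_homeo : forall g, G g -> is_phomeo g;
  pg_id : G pid;
  pg_comp : forall g h, G g -> G h -> G (pcomp h g);
  pg_inv : forall g, G g -> exists2 h, G h & is_pinv g h;
  pg_restr : forall g U, G g -> open U -> G (prestr g U);
  pg_glue : forall g, is_phomeo g ->
     (forall x, pdom g x -> exists U, [/\ open U, U x & G (prestr g U)]) -> G g
}.

Definition generates (Gam G : set parmap) : Prop :=
  [/\ (forall g, Gam g -> is_phomeo g),
      (forall x, exists2 g, Gam g & pdom g x \/ prng g x)
    & (forall g, G g <->
        (is_phomeo g /\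
         forall x, pdom g x -> exists U, [/\ open U, U x &
           exists ws : seq parmap,
             [/\ ws <> [::],
                 (forall w, List.In w ws -> Gam w \/ exists2 h, Gam h & is_pinv h w)
               & forall y, U y -> g y = pcomps ws y]]))].

Definition gen_symmetric (Gam : set parmap) : Prop :=
  Gam pid /\ forall g, Gam g -> exists2 h, Gam h & is_pinv g h.

Definition compacted (Gam : set parmap) (K : parmap -> set X) : set parmap :=
  [set prestr g (interior (K g)) | g in Gam].

Definition good_generating (G Gam : set parmap) (K : parmap -> set X) : Prop :=
  [/\ finite_set Gam, gen_symmetric Gam, generates Gam G,
      (forall g, Gam g -> compact (K g) /\ K g `<=` pdom g)
    & generates (compacted Gam K) G].

Definition compn (Gam : set parmap) (n : nat) : set parmap :=
  [set g | exists ws : seq parmap,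
     [/\ size ws = n, (forall w, List.In w ws -> Gam w) & g = pcomps ws]].

End PartialMaps.

Section Metric.
Context {R : realType} {X : PointedMetric.type R}.

Definition dynball (Gam : set (@parmap X)) (n : nat) (x : X) (eps : R) : set X :=
  [set y | forall g, compn Gam n g -> forall a b,
     g x = Some a -> g y = Some b -> mdist a b < eps].

Definition Phi (Gam : set (@parmap X)) (delta : R) (x : X) : set X :=
  [set y | forall n g, compn Gam n g -> forall a b,
     g x = Some a -> g y = Some b -> mdist a b <= delta].

Definition mu_invariant (G : set (@parmap X)) (mu : probability (borel X) R) : Prop :=
  forall g (A : set (borel X)), G g -> measurable A -> A `<=` pdom g ->
    mu (pimage g A) = mu A.

Definition mu_ergodic (G : set (@parmap X)) (mu : probability (borel X) R) : Prop :=
  forall A : set (borel X), measurable A ->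
    (forall g, G g -> pimage g (A `&` pdom g) `<=` A) ->
    mu A = 0%E \/ mu A = 1%E.

(* (G, G_2)-homogeneity; the condition only involves the generating set G_2 *)
Definition mu_homogeneous (Gam : set (@parmap X)) (mu : probability (borel X) R) : Prop :=
  [/\ (forall K : set X, compact K -> (mu K < +oo)%E),
      (exists K0 : set X, compact K0 /\ (0 < mu K0)%E)
    & forall eps, 0 < eps -> exists delta c, [/\ 0 < delta, 0 < c &
        forall n x y, (mu (dynball Gam n y delta) <= c%:E * mu (dynball Gam n x eps))%E]].

Definition upper_entropy (Gam : set (@parmap X)) (mu : probability (borel X) R) (x : X)
  : \bar R :=
  lim ((limn_esup (fun n : nat =>
          (- ((n%:R)^-1)%:E * lne (mu (dynball Gam n x eps)))%E))
       @[eps --> (0 : R)^'+]).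

Definition mu_expansive (Gam : set (@parmap X)) (mu : probability (borel X) R) : Prop :=
  exists2 delta, 0 < delta & forall x, mu (Phi Gam delta x) = 0%E.

End Metric.

(* Main.v *)
Require Import Defs.
From HB Require Import structures.
From mathcomp Require Import all_boot all_order all_algebra.
From mathcomp Require Import all_classical all_reals all_analysis.
From mathcomp Require Import lra.
Import Order.TTheory GRing.Theory Num.Theory.
Local Open Scope classical_set_scope.
Local Open Scope ring_scope.

Section S.
Context {R : realType} {X : PointedMetric.type R}.

Definition cont_open (g : @parmap X) : Prop :=
  open (pdom g) /\ forall x y, g x = Some y -> forall V, nbhs y V ->
         nbhs x [set x' | forall y', g x' = Some y' -> V y'].

Lemma phomeo_co g : is_phomeo g -> cont_open g.
Proof. by case=> ? _ _ ? _; split. Qed.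

Lemma open_pre g V : cont_open g -> open V -> open [set x | exists2 y, g x = Some y & V y].
Proof.
move=> [od cg] oV; rewrite openE => x [y gxy Vy].
have nV : nbhs y V by apply: open_nbhs_nbhs; split.
have nd : nbhs x (pdom g) by apply: open_nbhs_nbhs; split => //; exists y.
rewrite /interior; apply: filterS (filterI nd (cg _ _ gxy _ nV)).
by move=> z [[w gzw] H]; exists w => //; apply: H.
Qed.

Lemma co_pid : cont_open pid.
Proof.
split.
  have -> : pdom (@pid X) = setT by apply/seteqP; split=> x //= _; exists x.
  exact: openT.
move=> x y [<-] V nV; apply: filterS nV => z Vz y' [<-] //.
Qed.

Lemma co_comp g h : cont_open g -> cont_open h -> cont_open (pcomp h g).
Proof.
move=> cg [oh ch]; split.
  have -> : pdom (pcomp h g) = [set x | exists2 y, g x = Some y & pdom h y].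
    apply/seteqP; split => x; rewrite /pdom /pcomp /=.
      by case E: (g x) => [y|] [z] //= hz; exists y => //; exists z.
    by move=> [y -> [z hz]]; exists z.
  exact: open_pre.
move=> x z; rewrite /pcomp; case gx: (g x) => [y|] //= hyz V nV.
have := cg.2 _ _ gx _ (ch _ _ hyz _ nV).
apply: filterS => x' H z'; case gx': (g x') => [y'|] //= hz'.
exact: (H y' gx' z' hz').
Qed.

Lemma co_pcomps (Gam : set parmap) ws :
  (forall g, Gam g -> cont_open g) -> (forall w, List.In w ws -> Gam w) ->
  cont_open (pcomps ws).
Proof.
move=> HG; elim: ws => [|w ws IH] Hin /=; first exact: co_pid.
apply: co_comp; first by apply: IH => v hv; apply: Hin; right.
by apply: HG; apply: Hin; left.
Qed.

Lemma co_compn (Gam : set parmap) n g :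
  (forall g, Gam g -> cont_open g) -> compn Gam n g -> cont_open g.
Proof. by move=> HG [ws [_ Hin ->]]; exact: co_pcomps Hin. Qed.


Lemma compn_finite (Gam : set (@parmap X)) n : finite_set Gam -> finite_set (compn Gam n).
Proof.
move=> fG; elim: n => [|n IH].
  apply: (@sub_finite_set _ _ [set pid]); last exact: finite_set1.
  by move=> g [[|w ws] [//= _ _ ->]].
apply: (@sub_finite_set _ _ (\bigcup_(h in Gam) (pcomp h) @` compn Gam n)).
  move=> g [[|w ws] [//= [sz] Hin ->]].
  exists w; first by apply: Hin; left.
  by exists (pcomps ws) => //; exists ws; split => // v hv; apply: Hin; right.
by apply: bigcup_finite => // h _; apply: finite_image.
Qed.

Lemma open_lt (a : X) (e : R) : open [set b | mdist a b < e].
Proof.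
rewrite openE => b Hb; rewrite /interior /=.
have e0 : 0 < e - mdist a b by rewrite subr_gt0.
apply: filterS (nbhsx_ballx b _ e0) => c; rewrite ballEmdist /= => Hc.
have := metric_triangle a b c; move: Hb Hc; lra.
Qed.

Lemma open_gt (a : X) (e : R) : open [set b | e < mdist a b].
Proof.
rewrite openE => b Hb; rewrite /interior /=.
have e0 : 0 < mdist a b - e by rewrite subr_gt0.
apply: filterS (nbhsx_ballx b _ e0) => c; rewrite ballEmdist /= => Hc.
have := metric_triangle a c b; rewrite (metric_sym c b); move: Hb Hc; lra.
Qed.

Lemma open_meas (A : set X) : open A -> measurable (A : set (borel X)).
Proof. by move=> oA; apply: sub_sigma_algebra. Qed.

Lemma dynball_meas (Gam : set (@parmap X)) n x eps :
  (forall g, Gam g -> cont_open g) -> finite_set Gam ->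
  measurable (dynball Gam n x eps : set (borel X)).
Proof.
move=> cG fG.
change (measurable (\bigcap_(g in compn Gam n)
  [set y | forall a b, g x = Some a -> g y = Some b -> mdist a b < eps] : set (borel X))).
apply: fin_bigcap_measurable; first exact: compn_finite.
move=> g cg; have [og _] := @co_compn Gam n g cG cg.
case E: (g x) => [a|].
  have -> : [set y | forall a0 b, Some a = Some a0 -> g y = Some b -> mdist a0 b < eps]
     = ~` pdom g `|` [set y | exists2 b, g y = Some b & mdist a b < eps].
    apply/seteqP; split => y /=.
      case F: (g y) => [b|] H; last by left => -[b]; rewrite F.
      by right; exists b => //; apply: H.
    case => [H|[b gb Hb]] a0 b0 [<-] gb0.
      by exfalso; apply: H; exists b0.
    by move: gb0; rewrite gb => -[<-].
  apply: measurableU.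
    apply: measurableC; exact: open_meas.
  by apply: open_meas; apply: open_pre => //; [exact: (@co_compn Gam n g cG cg) | exact: open_lt].
have -> : [set y | forall a b, None = Some a -> g y = Some b -> mdist a b < eps] = setT.
  by apply/seteqP; split => y //= _ a b.
exact: measurableT.
Qed.


Lemma Phi_meas (Gam : set (@parmap X)) d x :
  (forall g, Gam g -> cont_open g) ->
  measurable (Phi Gam d x : set (borel X)).
Proof.
move=> cG.
have -> : Phi Gam d x = \bigcap_(p in [set p : nat * parmap | compn Gam p.1 p.2])
  [set y | forall a b, p.2 x = Some a -> p.2 y = Some b -> mdist a b <= d].
  apply/seteqP; split => y /= H.
    by move=> [n g] /= cg; exact: (H n g cg).
  by move=> n g cg; exact: (H (n, g) cg).
have cl : closed (\bigcap_(p in [set p : nat * parmap | compn Gam p.1 p.2])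
  [set y | forall a b, p.2 x = Some a -> p.2 y = Some b -> mdist a b <= d]).
  apply: closed_bigI => -[n g] /= cg.
  case E: (g x) => [a|].
    have -> : [set y | forall a0 b, Some a = Some a0 -> g y = Some b -> mdist a0 b <= d]
       = ~` [set y | exists2 b, g y = Some b & d < mdist a b].
      apply/seteqP; split => y /=.
        by move=> H [b gb Hb]; have := H a b erefl gb; rewrite leNgt Hb.
      move=> H a0 b [<-] gb; rewrite leNgt; apply/negP => Hb; apply: H.
      by exists b.
    rewrite closedC; apply: open_pre; last exact: open_gt.
    exact: (@co_compn Gam n g cG cg).
  have -> : [set y | forall a b, None = Some a -> g y = Some b -> mdist a b <= d] = setT.
    by apply/seteqP; split => y //= _ a b.
  exact: closedT.
rewrite -[X in measurable X]setCK; apply: measurableC; apply: open_meas.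
by rewrite openC.
Qed.

Lemma lift_ws (G1 : set (@parmap X)) (K : parmap -> set X) ws :
  (forall w, List.In w ws -> compacted G1 K w) ->
  exists ws', [/\ size ws' = size ws, (forall w, List.In w ws' -> G1 w) &
     forall x a, pcomps ws x = Some a -> pcomps ws' x = Some a].
Proof.
elim: ws => [|w ws IH] Hin.
  by exists [::]; split.
have [|ws' [sz H1 H2]] := IH; first by move=> v hv; apply: Hin; right.
have [g G1g gw] : compacted G1 K w by apply: Hin; left.
exists (g :: ws'); split => /=; first by rewrite sz.
  by move=> v [<-|hv] //; apply: H1.
move=> x a; change (obind w (pcomps ws x) = Some a -> obind g (pcomps ws' x) = Some a).
case E: (pcomps ws x) => [b|] //=.
rewrite (H2 _ _ E) /= -gw /prestr; by case: ifP.
Qed.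

Lemma Phi_sub (G1 : set (@parmap X)) (K : parmap -> set X) d eps n x :
  d < eps -> Phi G1 d x `<=` dynball (compacted G1 K) n x eps.
Proof.
move=> de y Hy g [ws [sz Hin ->]] a b ga gb.
have [ws' [sz' H1 H2]] := @lift_ws G1 K ws Hin.
apply: le_lt_trans de; apply: (Hy n (pcomps ws')); last exact: H2.
  by exists ws'; split => //; rewrite sz'.
exact: H2.
Qed.


Lemma limsup0 (m : nat -> \bar R) (eta : R) : 0 < eta ->
  (forall n, (eta%:E <= m n)%E /\ (m n <= 1)%E) ->
  limn_esup (fun n : nat => (- ((n%:R)^-1)%:E * lne (m n))%E) = 0%E.
Proof.
move=> eta0 Hm.
have Hr n : exists r, [/\ m n = r%:E, eta <= r & r <= 1].
  have [h1 h2] := Hm n.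
  have : m n \is a fin_num by rewrite ge0_fin_numE ?(le_lt_trans h2) ?ltey // (le_trans _ h1) // lee_fin ltW.
  move/fineK => e; exists (fine (m n)); split => //.
    by rewrite -lee_fin e.
  by rewrite -lee_fin e.
pose L := - ln eta.
have eta1 : eta <= 1 by have [r [_ h1 h2]] := Hr 0%N; apply: le_trans h2.
have L0 : 0 <= L by rewrite /L oppr_ge0 ln_le0.
have Hu n : (0 <= - ((n%:R)^-1)%:E * lne (m n))%E /\
            (- ((n%:R)^-1)%:E * lne (m n) <= ((n%:R)^-1 * L)%:E)%E.
  have [r [-> h1 h2]] := Hr n.
  have r0 : 0 < r by apply: lt_le_trans h1.
  rewrite lne_EFin // -EFinN -EFinM !lee_fin; split.
    by rewrite mulNr oppr_ge0 mulr_ge0_le0 ?invr_ge0 ?ln_le0.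
  rewrite mulNr -mulrN ler_wpM2l ?invr_ge0 // /L lerN2.
  by rewrite ler_ln ?posrE.
rewrite /limn_esup /limf_esup; apply/eqP; rewrite eq_le; apply/andP; split.
  apply/lee_addgt0Pr => e e0; rewrite add0e.
  pose N := (Num.truncn (L / e)).+1.
  apply: (@le_trans _ _ (ereal_sup ((fun n : nat => (- ((n%:R)^-1)%:E * lne (m n))%E) @` [set n | (N <= n)%N]))).
    apply: ereal_inf_lbound; exists [set n | (N <= n)%N] => //; by exists N.
  apply: ge_ereal_sup => _ [n /= Nn <-].
  apply: le_trans (Hu n).2 _; rewrite lee_fin.
  have Nlt : L / e < n%:R.
    apply: lt_le_trans (Num.Theory.truncnS_gt _) _; rewrite ler_nat; exact: Nn.
  have n0 : 0 < n%:R :> R by apply: le_lt_trans Nlt; rewrite divr_ge0 // ltW.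
  rewrite mulrC -[X in X <= _]/(L / n%:R) ler_pdivrMr //.
  by move: Nlt; rewrite ltr_pdivrMr // => /ltW; rewrite mulrC.
apply: le_ereal_inf_tmp => _ [V [N _ HV] <-].
apply: le_trans (Hu N).1 _; apply: ereal_sup_ubound; exists N => //.
by apply: HV => /=.
Qed.

End S.

Theorem mainTheorem16 (R : realType) (X : PointedMetric.type R)
  (G G1 : set (@parmap X)) (K : @parmap X -> set X) :
  compact [set: X] ->
  pseudogroup G ->
  good_generating G G1 K ->
  gen_symmetric (compacted G1 K) ->
  forall mu : probability (borel X) R,
    mu_invariant G mu ->
    mu_ergodic G mu ->
    mu_homogeneous (compacted G1 K) mu ->
    (forall x : X, (0 < upper_entropy (compacted G1 K) mu x)%E) ->
    mu_expansive G1 mu.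
Proof.
move=> _ _ [G1fin _ [ph1 _ _] _ [ph2 _ _]] _ mu _ _ [_ _ hom] ent.
have cG1 : forall g, G1 g -> cont_open g by move=> g /ph1/phomeo_co.
have cG2 : forall g, compacted G1 K g -> cont_open g by move=> g /ph2/phomeo_co.
have fG2 : finite_set (compacted G1 K) by apply: finite_image.
have mB n x e : measurable (dynball (compacted G1 K) n x e : set (borel X)).
  exact: dynball_meas.
pose x0 : X := point.
have [eps [eps0 Heps]] : exists eps, 0 < eps /\ forall eta, 0 < eta ->
    exists n, (mu (dynball (compacted G1 K) n x0 eps) < eta%:E)%E.
  apply: contrapT => H.
  have Hf eps : 0 < eps -> limn_esup (fun n : nat =>
          (- ((n%:R)^-1)%:E * lne (mu (dynball (compacted G1 K) n x0 eps)))%E) = 0%E.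
    move=> e0.
    have [eta [eta0 Heta]] : exists eta, 0 < eta /\ forall n,
        (eta%:E <= mu (dynball (compacted G1 K) n x0 eps))%E.
      apply: contrapT => H2; apply: H; exists eps; split => // eta eta0.
      apply: contrapT => H3; apply: H2; exists eta; split => // n.
      rewrite leNgt; apply/negP => H4; apply: H3; exists n.
      exact: H4.
    apply: (@limsup0 R (fun n => mu (dynball (compacted G1 K) n x0 eps)) eta eta0) => n.
    split => //; exact: probability_le1.
  have : upper_entropy (compacted G1 K) mu x0 = 0%E.
    rewrite /upper_entropy; apply: cvg_lim => //; apply: cvg_near_cst.
    near=> e; apply: Hf; near: e; exact: nbhs_right_gt.
  by move=> E; have := ent x0; rewrite E ltxx.
have [d [c [d0 c0 Hh]]] := hom eps eps0.
exists (d / 2); first by rewrite divr_gt0.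
move=> y.
have mP := @Phi_meas R X G1 (d / 2) y cG1.
apply/eqP; rewrite eq_le measure_ge0 andbT.
apply/lee_addgt0Pr => e e0; rewrite add0e.
have [n Hn] := Heps (e / c) (divr_gt0 e0 c0).
apply: (@le_trans _ _ (mu (dynball (compacted G1 K) n y d))).
  apply: le_measure; rewrite ?inE //.
  by apply: Phi_sub; rewrite ltr_pdivrMr // ltr_pMr // ltr1n.
apply: le_trans (Hh n x0 y) _.
apply: (@le_trans _ _ (c%:E * (e / c)%:E)%E).
  by apply: lee_wpmul2l; [rewrite lee_fin ltW | exact: ltW].
by rewrite -EFinM mulrCA divff ?mulr1 // gt_eqF.
Unshelve. all: by end_near.
Qed.
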